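(* Assume the setting of the context with $K\ge2$ temperatures, and assume $\rho$ is not constant on $S^K$. Let $\lambda>0$ and $h(\mathbf{x})=\lambda\rho(\mathbf{x})$. Then the optimal cost \[ \gamma^*=\min_{\nu\in\mathcal{P}(S^K)}\Big\{J(\nu)+\sum_{\mathbf{x}\in S^K}h(\mathbf{x})\nu(\mathbf{x})\Big\} \] satisfies $\gamma^*<\lambda/K!$; in particular, for two temperatures, $\gamma^*<\lambda/2$.
   Context: **Dynamics.** $S$ is a finite set and $K\ge2$. For $k=1,\dots,K$, $\Gamma^k$ is an irreducible intensity matrix on $S$, reversible with respect to its unique invariant distribution $\mu_k$. Set $\mu=\mu_1\times\cdots\times\mu_K$. **Permutations and weights.** $\Sigma_K$ is the set of permutations of $\{1,\dots,K\}$, and $\mathbf{x}^\sigma=(x_{\sigma^{-1}(1)},\dots,x_{\sigma^{-1}(K)})$. Define $\rho(\mathbf{x})=\mu(\mathbf{x})/\sum_{\sigma}\mu(\mathbf{x}^\sigma)$. **Infinite swapping rates.** - $\Gamma^\infty$ is the rate matrix on $S^K$ with $\Gamma^\infty_{\mathbf{x},\mathbf{y}}=\sum_\sigma\rho(\mathbf{x}^\sigma)\Gamma^{\sigma(i)}_{x_i,y_i}$ when $\mathbf{y}$ differs from $\mathbf{x}$ exactly in coordinate $i$. For $K=2$: $\Gamma^\infty_{(x_1,x_2),(y_1,x_2)}=\rho(x_1,x_2)\Gamma^1_{x_1,y_1}+\rho(x_2,x_1)\Gamma^2_{x_1,y_1}$, and analogously for the second coordinate. - Off-diagonal rates between states differing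 in two or more coordinates are $0$. - $q^\infty(\mathbf{x})=\sum_{\mathbf{y}\ne\mathbf{x}}\Gamma^\infty_{\mathbf{x},\mathbf{y}}$ and $\bar\mu(\mathbf{x})=\frac1{K!}\sum_\sigma\mu(\mathbf{x}^\sigma)$. **Functional.** For $\nu\in\mathcal{P}(S^K)$ with $\theta=\nu/\bar\mu$, \[ J(\nu)=\sum_{\mathbf{x}}q^\infty(\mathbf{x})\theta(\mathbf{x})\bar\mu(\mathbf{x})-\sum_{\mathbf{x}\ne\mathbf{y}}\theta^{1/2}(\mathbf{x})\theta^{1/2}(\mathbf{y})\Gamma^\infty_{\mathbf{x},\mathbf{y}}\bar\mu(\mathbf{x}). \] *)

(* Defs.v *)
From HB Require Import structures.
From mathcomp Require Import all_boot all_order all_algebra all_fingroup.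
From mathcomp Require Import reals.
Set Implicit Arguments. Unset Strict Implicit. Unset Printing Implicit Defensive.
Import Order.TTheory GRing.Theory Num.Theory.
Local Open Scope ring_scope.

Section Defs.
Variables (R : realType) (S : finType) (K : nat).

Definition conf := {ffun 'I_K -> S}.

Definition intensity (G : S -> S -> R) : Prop :=
  (forall x y, x != y -> 0 <= G x y) /\ (forall x, \sum_(y : S) G x y = 0).

Definition irreducible (G : S -> S -> R) : Prop :=
  forall x y, connect (fun a b => (a != b) && (0 < G a b)) x y.

Definition is_distribution (m : S -> R) : Prop :=
  (forall x, 0 <= m x) /\ \sum_(x : S) m x = 1.

Definition is_invariant (G : S -> S -> R) (m : S -> R) : Prop :=
  forall y, \sum_(x : S) m x * G x y = 0.

Definition reversible (G : S -> S -> R) (m : S -> R) : Prop :=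
  forall x y, m x * G x y = m y * G y x.

Definition xperm (s : 'S_K) (x : conf) : conf := [ffun i => x (s^-1 i)%g].

Variables (mu_ : 'I_K -> S -> R) (Gam : 'I_K -> S -> S -> R).

Definition mu (x : conf) : R := \prod_(k < K) mu_ k (x k).

Definition rho (x : conf) : R := mu x / \sum_(s : 'S_K) mu (xperm s x).

(* Gamma^infty_{x,y}: nonzero only when y differs from x in exactly one
   coordinate i, in which case it equals sum_sigma rho(x^sigma) Gamma^{sigma(i)}_{x_i,y_i}.
   (The sum over i has at most one nonzero term.) *)
Definition Ginf (x y : conf) : R :=
  \sum_(i : 'I_K | (x i != y i) && [forall j, (j != i) ==> (x j == y j)])
     \sum_(s : 'S_K) rho (xperm s x) * Gam (s i) (x i) (y i).

Definition qinf (x : conf) : R := \sum_(y : conf | y != x) Ginf x y.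

Definition mubar (x : conf) : R := (K`!%:R)^-1 * \sum_(s : 'S_K) mu (xperm s x).

Definition is_prob (nu : conf -> R) : Prop :=
  (forall x, 0 <= nu x) /\ \sum_(x : conf) nu x = 1.

Definition J (nu : conf -> R) : R :=
  let theta x := nu x / mubar x in
  \sum_(x : conf) qinf x * theta x * mubar x
  - \sum_(x : conf) \sum_(y : conf | y != x)
       Num.sqrt (theta x) * Num.sqrt (theta y) * Ginf x y * mubar x.

End Defs.

(* Main.v *)
Require Import Defs.
From HB Require Import structures.
From mathcomp Require Import all_boot all_order all_algebra all_fingroup.
From mathcomp Require Import reals.
From mathcomp Require Import ring lra.
Import Order.TTheory GRing.Theory Num.Theory.
Local Open Scope ring_scope.
Set Implicit Arguments. Unset Strict Implicit. Unset Printing Implicit Defensive.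

Lemma sqrt_bound (R : rcfType) (a b : R) : 1/4 <= a -> 1/4 <= b ->
  (a + b) / 2 - Num.sqrt a * Num.sqrt b <= (a - b) ^+ 2 / 2.
Proof.
move=> ha hb.
have a0 : 0 <= a by lra. have b0 : 0 <= b by lra.
set u := Num.sqrt a; set v := Num.sqrt b.
have ua : u ^+ 2 = a by rewrite sqr_sqrtr.
have vb : v ^+ 2 = b by rewrite sqr_sqrtr.
have u0 : 0 <= u by rewrite sqrtr_ge0.
have v0 : 0 <= v by rewrite sqrtr_ge0.
rewrite -ua -vb in ha hb *.
have hu : 1/2 <= u by nra.
have hv : 1/2 <= v by nra.
have h1 : 0 <= (u - v) ^+ 2 * ((u + v) ^+ 2 - 1).
  apply: mulr_ge0; first by rewrite sqr_ge0.
  nra.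
nra.
Qed.

Lemma J_bound (R : rcfType) (T : finType) (G : T -> T -> R) (m th : T -> R) :
  (forall x, 0 < m x) -> (forall x y, m x * G x y = m y * G y x) ->
  (forall x y, x != y -> 0 <= G x y) -> (forall x, 1/4 <= th x) ->
  \sum_x (\sum_(y | y != x) G x y) * th x * m x
  - \sum_x \sum_(y | y != x) Num.sqrt (th x) * Num.sqrt (th y) * G x y * m x
  <= \sum_x \sum_(y | y != x) (th x - th y) ^+ 2 / 2 * (G x y * m x).
Proof.
move=> mpos rev Gpos thb.
set S1 := \sum_x (\sum_(y | y != x) G x y) * th x * m x.
have E1 : S1 = \sum_x \sum_(y | y != x) th x * (G x y * m x).
  apply: eq_bigr => x _; rewrite mulr_suml mulr_suml; apply: eq_bigr => y _; ring.
have E2 : S1 = \sum_x \sum_(y | y != x) th y * (G x y * m x).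
  rewrite E1.
  transitivity (\sum_x \sum_(y | y != x) th x * (G y x * m y)).
    by apply: eq_bigr => x _; apply: eq_bigr => y _; rewrite [G x y * _]mulrC rev [m y * _]mulrC.
  rewrite [LHS](eq_bigr (fun x => \sum_y if y != x then th x * (G y x * m y) else 0));
    last by move=> x _; rewrite big_mkcond.
  rewrite exchange_big /=; apply: eq_bigr => y _; rewrite [RHS]big_mkcond /=.
  by apply: eq_bigr => x _; rewrite eq_sym.
have -> : S1 = (S1 + S1) / 2 by field.
rewrite {1}E1 E2 -big_split /= mulr_suml -sumrB.
apply: ler_sum => x _.
rewrite -big_split /= mulr_suml -sumrB.
apply: ler_sum => y hy.
have w0 : 0 <= G x y * m x by apply: mulr_ge0; [apply: Gpos; rewrite eq_sym|exact: ltW].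
have h := sqrt_bound (thb x) (thb y).
have := ler_wpM2r w0 h.
set s := Num.sqrt _ * _. move=> h2.
suff -> : (th x * (G x y * m x) + th y * (G x y * m x)) / 2 - s * G x y * m x
   = ((th x + th y) / 2 - s) * (G x y * m x) by [].
ring.
Qed.

Lemma xpermM (S : finType) (K : nat) (s t : 'S_K) (x : conf S K) :
  xperm t (xperm s x) = xperm (s * t)%g x.
Proof. by apply/ffunP => i; rewrite !ffunE invMg permM. Qed.

Lemma xperm1 (S : finType) (K : nat) (x : conf S K) : xperm 1%g x = x.
Proof. by apply/ffunP => i; rewrite !ffunE invg1 perm1. Qed.

Lemma xperm_inj (S : finType) (K : nat) (s : 'S_K) : injective (@xperm S K s).
Proof.
move=> x y h; rewrite -(xperm1 x) -(xperm1 y) -(mulgV s) -!xpermM.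
by rewrite h.
Qed.

Lemma mu_xperm (R : realType) (S : finType) (K : nat) (mu_ : 'I_K -> S -> R)
  (s : 'S_K) (x : conf S K) :
  mu mu_ (xperm s x) = \prod_j mu_ (s j) (x j).
Proof.
rewrite /mu (reindex_inj (@perm_inj _ s)) /=.
by apply: eq_bigr => j _; rewrite ffunE permK.
Qed.

Lemma Zperm (R : realType) (S : finType) (K : nat) (mu_ : 'I_K -> S -> R)
  (s : 'S_K) (x : conf S K) :
  \sum_(t : 'S_K) mu mu_ (xperm t (xperm s x)) = \sum_(t : 'S_K) mu mu_ (xperm t x).
Proof.
under eq_bigr do rewrite xpermM.
by rewrite [RHS](reindex_inj (mulgI s)).
Qed.

Lemma mu_pos (R : realType) (S : finType) (G : S -> S -> R) (m : S -> R) :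
  irreducible G -> is_distribution m -> reversible G m -> forall x, 0 < m x.
Proof.
move=> irr [m0 m1] rev x.
have [y hy] : exists y, 0 < m y.
  case: (pickP (fun y => 0 < m y)) => [y hy|h]; first by exists y.
  have : \sum_z m z = 0.
    apply: big1 => z _.
    by have := h z; have := m0 z; rewrite le0r => /orP [/eqP ->|->].
  by rewrite m1 => /eqP; rewrite oner_eq0.
move: (irr y x) => /connectP [p hp ->] {x}.
elim: p y hy hp => [|z p IH] y hy //= /andP [/andP [nyz gyz] hp].
apply: (IH z) => //.
have : 0 < m z * G z y by rewrite -rev mulr_gt0.
have := m0 z; rewrite le0r => /orP [/eqP ->|//]; by rewrite mul0r ltxx.
Qed.

Section Model.
Variables (R : realType) (S : finType) (K : nat) (mu_ : 'I_K -> S -> R)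
  (Gam : 'I_K -> S -> S -> R).
Local Notation conf := (conf S K).
Local Notation mu := (mu mu_).
Local Notation rho := (rho mu_).
Local Notation mubar := (mubar mu_).
Local Notation Ginf := (Ginf mu_ Gam).
Local Notation Z x := (\sum_(s : 'S_K) mu (xperm s x)).

Lemma mu_gt0 : (forall k y, 0 < mu_ k y) -> forall x, 0 < mu x.
Proof. by move=> hp x; apply: prodr_gt0 => k _. Qed.

Lemma mu_le_Z : (forall k y, 0 < mu_ k y) -> forall x : conf, mu x <= Z x.
Proof.
move=> hp x; rewrite (bigD1 1%g) //= xperm1 lerDl.
by apply: sumr_ge0 => s _; apply: ltW; apply: mu_gt0.
Qed.

Lemma Z_gt0 : (forall k y, 0 < mu_ k y) -> forall x : conf, 0 < Z x.
Proof. by move=> hp x; apply: lt_le_trans (mu_le_Z hp x); apply: mu_gt0. Qed.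

Lemma mubar_rho : (forall k y, 0 < mu_ k y) -> forall (s : 'S_K) (x : conf),
  mubar x * rho (xperm s x) = (K`!%:R)^-1 * mu (xperm s x).
Proof.
move=> hp s x; rewrite /mubar /rho Zperm.
have := Z_gt0 hp x; set z := Z x => hz.
rewrite -mulrA; congr (_ * _); rewrite mulrC -mulrA mulVf ?mulr1 //.
by rewrite gt_eqF.
Qed.

Lemma rho_mubar : (forall k y, 0 < mu_ k y) -> forall x : conf,
  rho x * mubar x = (K`!%:R)^-1 * mu x.
Proof. by move=> hp x; have := mubar_rho hp 1%g x; rewrite xperm1 mulrC. Qed.

Lemma rho_ge0 : (forall k y, 0 < mu_ k y) -> forall x : conf, 0 <= rho x.
Proof.
by move=> hp x; apply: divr_ge0; [apply: ltW; apply: mu_gt0|apply: ltW; apply: Z_gt0].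
Qed.

Lemma rho_le1 : (forall k y, 0 < mu_ k y) -> forall x : conf, rho x <= 1.
Proof.
move=> hp x; rewrite /rho ler_pdivrMr ?mul1r; first exact: mu_le_Z.
exact: Z_gt0.
Qed.

Lemma sum_mu : (forall k, is_distribution (mu_ k)) -> \sum_(x : conf) mu x = 1.
Proof.
move=> hd; rewrite /Defs.mu -bigA_distr_bigA /=.
by apply: big1 => k _; case: (hd k).
Qed.

Lemma sum_mubar : (forall k y, 0 < mu_ k y) -> (forall k, is_distribution (mu_ k)) ->
  \sum_(x : conf) mubar x = 1.
Proof.
move=> hp hd; rewrite /mubar -mulr_sumr exchange_big /=.
rewrite (eq_bigr (fun _ => 1)); last first.
  move=> s _; rewrite -[RHS](sum_mu hd).
  by rewrite [RHS](reindex_inj (@xperm_inj S K s)).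
rewrite sumr_const card_Sn mulVf //.
by rewrite pnatr_eq0 -lt0n fact_gt0.
Qed.

Lemma Ginf_ge0 : (forall k y, 0 < mu_ k y) -> (forall k, intensity (Gam k)) ->
  forall x y : conf, x != y -> 0 <= Ginf x y.
Proof.
move=> hp hi x y _; apply: sumr_ge0 => i /andP [h _].
apply: sumr_ge0 => s _; apply: mulr_ge0; first exact: rho_ge0.
by case: (hi (s i)) => h1 _; apply: h1.
Qed.

Lemma Ginf_rev : (forall k y, 0 < mu_ k y) -> (forall k, reversible (Gam k) (mu_ k)) ->
  forall x y : conf, mubar x * Ginf x y = mubar y * Ginf y x.
Proof.
move=> hp hrev x y; rewrite /Ginf !mulr_sumr.
apply: eq_big => [i|i /andP [hxy /forallP hf]].
  rewrite eq_sym; congr andb; apply: eq_forallb => j.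
  by rewrite [x j == _]eq_sym.
rewrite !mulr_sumr; apply: eq_bigr => s _; rewrite mulrA [in RHS]mulrA !mubar_rho //.
rewrite !mu_xperm (bigD1 i) // [in RHS](bigD1 i) //=.
have E : \prod_(j | j != i) mu_ (s j) (x j) = \prod_(j | j != i) mu_ (s j) (y j).
  by apply: eq_bigr => j hj; rewrite (eqP (implyP (hf j) hj)).
rewrite E.
transitivity ((K`!%:R)^-1 * \prod_(j | j != i) mu_ (s j) (y j) *
   (mu_ (s i) (x i) * Gam (s i) (x i) (y i))); first by ring.
by rewrite hrev; ring.
Qed.

End Model.

Lemma term_le_sum (R : realType) (T : finType) (F : T -> R) (a : T) :
  (forall x, 0 <= F x) -> F a <= \sum_x F x.
Proof.
move=> h; rewrite (bigD1 a) //= lerDl; by apply: sumr_ge0.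
Qed.

Unset Implicit Arguments.

Theorem lemmaA2 (R : realType) (S : finType) (K : nat) (hK : (2 <= K)%N)
  (Gam : 'I_K -> S -> S -> R) (mu_ : 'I_K -> S -> R)
  (hGi : forall k, intensity (Gam k))
  (hGirr : forall k, irreducible (Gam k))
  (hmud : forall k, is_distribution (mu_ k))
  (hmuinv : forall k, is_invariant (Gam k) (mu_ k))
  (hmuuniq : forall k (m : S -> R),
      is_distribution m -> is_invariant (Gam k) m -> m = mu_ k)
  (hrev : forall k, reversible (Gam k) (mu_ k))
  (hrho : exists x y : conf S K, rho mu_ x != rho mu_ y)
  (lambda : R) (hlam : 0 < lambda) :
  exists nu : conf S K -> R, is_prob nu /\
    J mu_ Gam nu + \sum_(x : conf S K) (lambda * rho mu_ x) * nu x
      < lambda / (K`!)%:R.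
Proof.
have hp : forall k y, 0 < mu_ k y.
  by move=> k; apply: mu_pos (hGirr k) (hmud k) (hrev k).
set T : R := (K`!)%:R.
have Tge1 : 1 <= T by rewrite /T ler1n fact_gt0.
set c := T^-1.
have c0 : 0 < c by rewrite /c invr_gt0; lra.
have c1 : c <= 1 by rewrite /c invf_le1 //; lra.
set m := mubar mu_.
have mpos : forall x, 0 < m x.
  move=> x; rewrite /m /mubar mulr_gt0 //; exact: Z_gt0.
have sm : \sum_x m x = 1 by apply: sum_mubar.
have srm : \sum_x rho mu_ x * m x = c.
  under eq_bigr do rewrite rho_mubar //.
  by rewrite -mulr_sumr sum_mu // mulr1.
have rho0 := rho_ge0 hp.
have rho1 := rho_le1 hp.
set f := fun x => c - rho mu_ x.
set D := \sum_x (rho mu_ x - c) ^+ 2 * m x.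
have D0 : 0 < D.
  case: hrho => x1 [x2 hx].
  have [x [hxc _]] : exists x, rho mu_ x != c /\ True.
    case: (eqVneq (rho mu_ x1) c) => h; last by exists x1.
    by exists x2; split => //; rewrite -h eq_sym.
  rewrite /D; apply: (lt_le_trans _ (@term_le_sum _ _ (fun y => (rho mu_ y - c) ^+ 2 * m y) x _)); last first.
    by move=> y; apply: mulr_ge0; [apply: sqr_ge0|apply: ltW].
  apply: mulr_gt0 => //; rewrite exprn_even_gt0 //.
  by rewrite subr_eq0.
set A := \sum_x \sum_(y | y != x) (f x - f y) ^+ 2 / 2 * (Ginf mu_ Gam x y * m x).
have A0 : 0 <= A.
  apply: sumr_ge0 => x _; apply: sumr_ge0 => y hy.
  apply: mulr_ge0; first by apply: divr_ge0 => //; apply: sqr_ge0.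
  apply: mulr_ge0; last exact: ltW.
  by apply: Ginf_ge0 => //; rewrite eq_sym.
set P := lambda * D.
have P0 : 0 < P by apply: mulr_gt0.
set e := P / (2 * (A + 1) + 2 * P).
have Q0 : 0 < 2 * (A + 1) + 2 * P by lra.
have eQ : e * (2 * (A + 1) + 2 * P) = P.
  by rewrite /e mulrC mulrA mulrC mulrA mulVf ?mul1r //; apply: lt0r_neq0.
have e0 : 0 < e by rewrite /e divr_gt0.
have e12 : e <= 1/2 by nra.
have eA : e * A < P by nra.
set th := fun x => 1 + e * f x.
have thb : forall x, 1/4 <= th x.
  move=> x; rewrite /th /f; have := rho0 x; have := rho1 x; nra.
exists (fun x => m x * th x); split.
  split.
    move=> x; apply: mulr_ge0; first exact: ltW.
    by have := thb x; lra.
  transitivity (\sum_x m x + e * c * \sum_x m x - e * \sum_x rho mu_ x * m x).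
    rewrite !mulr_sumr -big_split -sumrB /=; apply: eq_bigr => x _.
    by rewrite /th /f; ring.
  by rewrite sm srm; ring.
have thE : forall x, m x * th x / mubar mu_ x = th x.
  by move=> x; rewrite -/m mulrC mulKf //; apply: lt0r_neq0.
have HJ : J mu_ Gam (fun x => m x * th x) <= e ^+ 2 * A.
  rewrite /J /=.
  under eq_bigr do rewrite thE.
  under [X in _ - X <= _]eq_bigr do under eq_bigr do rewrite !thE.
  rewrite /qinf.
  apply: le_trans (J_bound _ _ _ _) _.
  - exact: mpos.
  - by move=> x y; apply: Ginf_rev.
  - by move=> x y; apply: Ginf_ge0.
  - exact: thb.
  rewrite /A mulr_sumr le_eqVlt; apply/orP; left; apply/eqP; apply: eq_bigr => x _.
  rewrite mulr_sumr; apply: eq_bigr => y _.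
  by rewrite /th /m; ring.
have Hh : \sum_x lambda * rho mu_ x * (m x * th x) = lambda * c - e * P.
  transitivity (lambda * \sum_x rho mu_ x * m x + lambda * e * c ^+ 2 * \sum_x m x
       - lambda * e * c * \sum_x rho mu_ x * m x - lambda * e * D).
    rewrite /D !mulr_sumr -!big_split -!sumrB /=; apply: eq_bigr => x _.
    by rewrite /th /f; ring.
  by rewrite sm srm /P; ring.
rewrite Hh.
nra.
Qed.
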